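(* Let $\mathcal{G}$ be a subgraph of $G$ satisfying $P_{\mathcal{G}}$, and let $q\in\Delta$ with $G_q=\mathcal{G}$. Then $q\in\Gamma$ if and only if $q\in\Gamma_{\mathcal{G}}$, and in that case $q$ is a stable equilibrium. In other words, $\Gamma_s\cap\{q\in\Delta:G_q=\mathcal{G}\}=\Gamma\cap\{q\in\Delta:G_q=\mathcal{G}\}=\Gamma_{\mathcal{G}}$.
   Context: Let $G=(\mathbb{V},E)$ be a finite graph with adjacency $\sim$ and edge set $E$. Let $a_{ij}=a_{ji}\ge0$ ($>0$ only if $i\sim j$) and $p_{ij}=p_{ji}\in[0,1]$ ($=0$ if $i\not\sim j$), with some $a_{ij}p_{ij}>0$. Fix $h_1\in(0,1]$; $\Delta$ is the set of arrays $x=(x_{ij})$ with $x_{ij}=x_{ji}\ge0$, $x_{ij}=0$ if $i\not\sim j$, $\sum_{i,j}x_{ij}=1$, $\sum_{(i,j):a_{ij}p_{ij}>0}x_{ij}\ge h_1$; $x_i=\sum_jx_{ij}$. $\partial\Delta$: the $x\in\Delta$ for which some vertex $i$ having a neighbour $j$ with $a_{ij}p_{ij}>0$ has $\sum_{j:a_{ij}p_{ij}>0}x_{ij}=0$. $H(x)=\sum_{(i,j):x_{ij}>0}a_{ij}p_{ij}x_{ij}^2/(x_ix_j)$; $y_{ij}=a_{ij}p_{ij}x_{ij}/(x_ix_j)$ ($0$ if $a_{ij}p_{ij}=0$); $F(x)_{ij}=x_{ij}(y_{ij}-H(x))$ ($0$ if $x_{ij}=0$); $\Gamma=\{x\in\Delta:F(x)=0\}$.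 For $x\in\Gamma\cap(\Delta\setminus\partial\Delta)$, $J(x)$ is the Jacobian (indexed by pairs of edges) of $(x_e)_{e\in E}\mapsto(F_e(x))_{e\in E}$, with $x_{ij}=x_{ji}=x_e$ for $e=\{i,j\}$, $x_i=\sum_jx_{ij}$, the formulas for $H$ (terms with $a_{ij}p_{ij}>0$) and $F$ regarded as smooth functions of unconstrained variables near $x$. $x$ is a stable equilibrium iff $x\in\Gamma\cap(\Delta\setminus\partial\Delta)$ and all eigenvalues of $J(x)$ have nonpositive real part; $\Gamma_s$ is the set of stable equilibria. $G_x$: subgraph with vertex set $\mathbb{V}$, $i,j$ adjacent iff $x_{ij}>0$. For a subgraph $\mathcal{G}$ of $G$ (vertex set $\mathbb{V}$), $P_{\mathcal{G}}$ means: (1) all edges $\{i,j\}$ of $\mathcal{G}$ in a same component have the same value $a_{ij}p_{ij}>0$; (2) each component has at most one vertex with several neighbours; (3) a vertex $i$ lies on an edge of $\mathcal{G}$ iff $a_{ij}p_{ij}>0$ for some $j\sim i$. Under $P_{\mathcal{G}}$: the nucleus of a component is its unique vertex with several neighbours (chosen arbitrarily if the component has exactly two vertices; the vertex itself if isolated); $N$ is the set of nuclei; for $i\in N$, $(ap)_i=a_{ik}p_{ik}$ for any $\mathcal{G}$-neighbour $k$ of $i$ ($:=0$ if $i$ is isolated). $\Gamma_{\mathcal{G}}$ is the set of $q\in\Delta$ with $G_q=\mathcal{G}$, $q_i=(ap)_i/(2\sum_{j\in N}(ap)_j)$ for all $i\in N$, and for each $i\in N$ the numbers $q_{ij}$ ($j$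 a $\mathcal{G}$-neighbour of $i$) positive with sum $q_i$. *)

(* Defs.v *)
From HB Require Import structures.
From mathcomp Require Import all_boot all_order all_algebra.
From mathcomp Require Import all_classical all_reals all_analysis.
From mathcomp Require Import complex.

Set Implicit Arguments.
Unset Strict Implicit.
Unset Printing Implicit Defensive.

Import Order.TTheory GRing.Theory Num.Theory.
Local Open Scope ring_scope.

Section Model.
Variables (R : realType) (V : finType) (adj : rel V) (a p : V -> V -> R)
  (h1 : R).

Definition ap (i j : V) : R := a i j * p i j.

Definition standing_hyps : Prop :=
  [/\ (forall i j, adj i j = adj j i) /\ (forall i, ~~ adj i i),
      (forall i j, a i j = a j i /\ 0 <= a i j /\ (0 < a i j -> adj i j)),
      (forall i j, p i j = p j i /\ 0 <= p i j /\ p i j <= 1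
                   /\ (~~ adj i j -> p i j = 0)),
      (exists i j, 0 < a i j * p i j) & (0 < h1 /\ h1 <= 1)].

Definition vsum (x : V -> V -> R) (i : V) : R := \sum_(j : V) x i j.

Definition inDelta (x : V -> V -> R) : Prop :=
  [/\ (forall i j, x i j = x j i), (forall i j, 0 <= x i j),
      (forall i j, ~~ adj i j -> x i j = 0),
      \sum_(i : V) \sum_(j : V) x i j = 1 &
      h1 <= \sum_(i : V) \sum_(j : V | 0 < ap i j) x i j].

Definition inBoundary (x : V -> V -> R) : Prop :=
  inDelta x /\
  exists i, (exists j, adj i j /\ 0 < ap i j) /\
            \sum_(j : V | 0 < ap i j) x i j = 0.

Definition Hf (x : V -> V -> R) : R :=
  \sum_(i : V) \sum_(j : V | 0 < x i j)
     ap i j * x i j ^+ 2 / (vsum x i * vsum x j).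

Definition yf (x : V -> V -> R) (i j : V) : R :=
  if 0 < ap i j then ap i j * x i j / (vsum x i * vsum x j) else 0.

Definition Ff (x : V -> V -> R) (i j : V) : R :=
  if x i j == 0 then 0 else x i j * (yf x i j - Hf x).

Definition inGamma (x : V -> V -> R) : Prop :=
  inDelta x /\ forall i j, Ff x i j = 0.

(* Edges of G: each edge {i,j} is represented once, as the ordered pair
   whose first component has smaller rank in the enumeration of V. *)
Definition is_edge (e : V * V) : bool :=
  adj e.1 e.2 && (enum_rank e.1 < enum_rank e.2)%N.
Definition edge := {e : V * V | is_edge e}.

(* the symmetric array with x_ij = x_ji = v_e for e = {i,j} (0 off edges) *)
Definition arrOf (v : edge -> R) (i j : V) : R :=
  \sum_(e : edge | (((val e).1 == i) && ((val e).2 == j))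
                   || (((val e).1 == j) && ((val e).2 == i))) v e.

(* H and F as smooth functions of the unconstrained edge variables *)
Definition Hsmooth (v : edge -> R) : R :=
  \sum_(i : V) \sum_(j : V | 0 < ap i j)
     ap i j * arrOf v i j ^+ 2 / (vsum (arrOf v) i * vsum (arrOf v) j).

Definition Fsmooth (v : edge -> R) (e : edge) : R :=
  arrOf v (val e).1 (val e).2 *
  (yf (arrOf v) (val e).1 (val e).2 - Hsmooth v).

Definition edgevec (x : V -> V -> R) : edge -> R :=
  fun e => x (val e).1 (val e).2.

Definition upd (v : edge -> R) (f : edge) (t : R) : edge -> R :=
  fun g => if g == f then t else v g.

Definition jac (x : V -> V -> R) (e f : edge) : R :=
  derive1 (fun t : R => Fsmooth (upd (edgevec x) f t) e) (edgevec x f).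

Definition jacmx (x : V -> V -> R) : 'M[R]_#|{: edge}| :=
  \matrix_(k, l) jac x (enum_val k) (enum_val l).

Definition eigen_nonpos_re (M : 'M[R]_#|{: edge}|) : Prop :=
  forall z : R[i], root (char_poly (map_mx (fun r : R => r%:C%C) M)) z ->
    complex.Re z <= 0.

Definition stable_eq (x : V -> V -> R) : Prop :=
  [/\ inGamma x, ~ inBoundary x & eigen_nonpos_re (jacmx x)].

Definition is_subgraph (g : rel V) : Prop :=
  (forall i j, g i j = g j i) /\ (forall i j, g i j -> adj i j).

Definition nbrs (g : rel V) (i : V) : {set V} := [set j | g i j].

Definition P_sub (g : rel V) : Prop :=
  [/\ (forall i j, g i j -> 0 < ap i j),
      (forall i j k l, g i j -> g k l -> connect g i k -> ap i j = ap k l),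
      (forall i k, connect g i k -> (1 < #|nbrs g i|)%N ->
                   (1 < #|nbrs g k|)%N -> i = k) &
      (forall i, (exists j, g i j) <-> (exists j, adj i j /\ 0 < ap i j))].

(* N is a valid choice of nuclei: one per component, namely the vertex with
   several neighbours when it exists (arbitrary otherwise). *)
Definition is_nuclei (g : rel V) (N : {set V}) : Prop :=
  (forall i, exists k, [/\ k \in N, connect g i k &
                         forall k', k' \in N -> connect g i k' -> k' = k]) /\
  (forall k i, k \in N -> connect g k i -> (1 < #|nbrs g i|)%N -> i = k).

Definition apN (g : rel V) (i : V) : R :=
  if [pick k | g i k] is Some k then ap i k else 0.

Definition graph_is (x : V -> V -> R) (g : rel V) : Prop :=
  forall i j, (0 < x i j) = g i j.

Definition inGammaG (g : rel V) (N : {set V}) (q : V -> V -> R) : Prop :=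
  [/\ inDelta q, graph_is q g,
      (forall i, i \in N ->
         vsum q i = apN g i / (2 * \sum_(j in N) apN g j)) &
      (forall i, i \in N -> (forall j, g i j -> 0 < q i j) /\
                            \sum_(j : V | g i j) q i j = vsum q i)].

End Model.

(* Main.v *)
Require Import Defs.
From HB Require Import structures.
From mathcomp Require Import all_boot all_order all_algebra.
From mathcomp Require Import all_classical all_reals all_analysis.
From mathcomp Require Import complex.
From mathcomp Require Import ring lra.
Import Order.TTheory GRing.Theory Num.Theory.
Import numFieldNormedType.Exports.
Local Open Scope ring_scope.
Local Open Scope classical_set_scope.

Section C.
Variables (R : realType) (V : finType).
Variable (Y : R -> V -> V -> R) (t0 : R).
Hypothesis HY : forall i j, Y t i j @[t --> t0] --> Y t0 i j.

Lemma vs_cvg i : vsum (Y t) i @[t --> t0] --> vsum (Y t0) i.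
Proof.
rewrite /vsum; apply: cvg_big => //; first exact: add_continuous.
Qed.

Lemma ratio_cvg (c : R) i j : vsum (Y t0) i * vsum (Y t0) j != 0 ->
  c * Y t i j ^+ 2 / (vsum (Y t) i * vsum (Y t) j) @[t --> t0] -->
  c * Y t0 i j ^+ 2 / (vsum (Y t0) i * vsum (Y t0) j).
Proof.
move=> H; apply: cvgM; first apply: cvgM; first exact: cvg_cst.
  rewrite expr2; apply: cvgM; exact: HY.
apply: cvgV => //; apply: cvgM; exact: vs_cvg.
Qed.
Lemma ratio1_cvg (c : R) i j : vsum (Y t0) i * vsum (Y t0) j != 0 ->
  c * Y t i j / (vsum (Y t) i * vsum (Y t) j) @[t --> t0] -->
  c * Y t0 i j / (vsum (Y t0) i * vsum (Y t0) j).
Proof.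
move=> H; apply: cvgM; first apply: cvgM; first exact: cvg_cst.
  exact: HY.
apply: cvgV => //; apply: cvgM; exact: vs_cvg.
Qed.
End C.

Section D.
Variables (R : realType).
Lemma derive_tG (G : R -> R) : G t @[t --> (0:R)] --> G 0 ->
  derive1 (fun t => t * G t) 0 = G 0.
Proof.
move=> cG; rewrite /derive1; apply: cvg_lim => //.
have : G @ (0:R)^' --> G 0 by apply/continuous_withinNx.
apply: cvg_trans; apply: near_eq_cvg; near=> h.
have hn : h != 0 by near: h; exact: nbhs_dnbhs_neq.
rewrite /= addr0 mul0r subr0.
by rewrite -[_ *: _]/(_ * _) mulrA mulVf // mul1r.
Unshelve. all: by end_near.
Qed.
End D.

Section E.
Variables (R : realType).
Lemma derive_fact (F K : R -> R) (t0 : R) : K h @[h --> (0:R)] --> K 0 ->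
  (\forall h \near (0:R), h != 0 -> F (h + t0) - F t0 = h * K h) ->
  derive1 F t0 = K 0.
Proof.
move=> cK HF; rewrite /derive1; apply: cvg_lim => //.
have : K @ (0:R)^' --> K 0 by apply/continuous_withinNx.
apply: cvg_trans; apply: near_eq_cvg.
have HF' : \forall h \near (0:R)^', h != 0 -> F (h + t0) - F t0 = h * K h.
  exact: cvg_within HF.
near=> h.
have hn : h != 0 by near: h; exact: nbhs_dnbhs_neq.
have E : h != 0 -> F (h + t0) - F t0 = h * K h by near: h; exact: HF'.
rewrite /= (E hn).
by rewrite -[_ *: _]/(_ * _) mulrA mulVf // mul1r.
Unshelve. all: by end_near.
Qed.

Lemma K_cvg (al be A s tau C : R) : s != 0 ->
  be * (A / (s + tau * h) - C) - al * A * tau / (s * (s + tau * h)) @[h --> (0:R)]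
  --> be * (A / (s + tau * 0) - C) - al * A * tau / (s * (s + tau * 0)).
Proof.
move=> s0.
have L : s + tau * h @[h --> (0:R)] --> s + tau * 0.
  apply: cvgD; first exact: cvg_cst. apply: cvgM; [exact: cvg_cst|exact: cvg_id].
have s0' : s + tau * 0 != 0 by rewrite mulr0 addr0.
apply: cvgB; apply: cvgM; try exact: cvg_cst.
  apply: cvgB; last exact: cvg_cst. apply: cvgM; first exact: cvg_cst.
  exact: cvgV.
apply: cvgV; first by rewrite mulf_neq0.
apply: cvgM; [exact: cvg_cst | exact: L].
Qed.
End E.

Lemma char_poly_tr (F : fieldType) n (A : 'M[F]_n) : char_poly A^T = char_poly A.
Proof.
rewrite /char_poly /char_poly_mx.
by rewrite -[\det ('X%:M - _ A)]det_tr raddfB /= tr_scalar_mx map_trmx.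
Qed.

Lemma ReDC (R : realType) (z : R[i]) (r : R) :
  complex.Re (z + r%:C)%C = complex.Re z + r.
Proof. by case: z. Qed.

Lemma nz_pos (R : realType) (z : R[i]) (r : R) :
  0 < complex.Re z -> 0 <= r -> z + r%:C%C != 0.
Proof.
move=> zp r0; apply/eqP => H.
have E : complex.Re z + r = 0 by rewrite -ReDC H.
lra.
Qed.

Section Pf.
Variables (R : realType) (V : finType) (adj : rel V) (a p : V -> V -> R) (h1 : R).
Hypothesis hs : standing_hyps adj a p h1.
Variables (g : rel V) (N : {set V}).
Hypotheses (hsub : is_subgraph adj g) (hP : P_sub adj a p g) (hN : is_nuclei g N).

Local Notation ap := (ap a p).

Lemma adj_irr i : adj i i = false.
Proof. by case: hs => [[_ H] _ _ _ _]; apply/negbTE. Qed.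

Lemma ap_sym i j : ap i j = ap j i.
Proof. by case: hs => [_ Ha Hp _ _]; rewrite /Defs.ap (proj1 (Ha i j)) (proj1 (Hp i j)). Qed.

Lemma ap_ge0 i j : 0 <= ap i j.
Proof. by case: hs => [_ Ha Hp _ _]; rewrite /Defs.ap mulr_ge0 //; [case: (Ha i j) => _ [] | case: (Hp i j) => _ []]. Qed.

Lemma ap_adj i j : 0 < ap i j -> adj i j.
Proof.
case: hs => [_ Ha Hp _ _]; rewrite /Defs.ap => H.
case: (Ha i j) => _ [Ha0 Ha1]; apply: Ha1.
rewrite lt_def Ha0 andbT; apply/eqP => a0; move: H; by rewrite a0 mul0r ltxx.
Qed.

Lemma g_sym : symmetric g.
Proof. by case: hsub. Qed.

Lemma g_adj i j : g i j -> adj i j.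
Proof. by case: hsub => _; apply. Qed.

Lemma g_irr i : g i i = false.
Proof. by apply/negbTE/negP => /g_adj; rewrite adj_irr. Qed.

Lemma g_ap i j : g i j -> 0 < ap i j.
Proof. by case: hP => H _ _ _; apply: H. Qed.

Lemma csym : connect_sym g.
Proof. exact: sym_connect_sym g_sym. Qed.

Lemma nbrs1 {i j y} : (#|nbrs g i| <= 1)%N -> g i j -> g i y -> y = j.
Proof.
move=> /card_le1_eqP H gij giy.
have := H y j; rewrite !inE => /(_ giy gij) /=; done.
Qed.

Lemma N_edge {i j} : g i j -> (i \in N) = ~~ (j \in N).
Proof.
move=> gij; case: hN => [H1 H2].
have ne : i != j by apply/eqP => e; move: gij; rewrite e g_irr.
case iN: (i \in N); case jN: (j \in N) => //=.
- case: (H1 i) => k [_ _ U].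
  have := U i iN (connect0 _ _); have := U j jN (connect1 gij).
  by move=> ej ei; move: ne; rewrite ej ei eqxx.
- case: (H1 i) => k [kN cik U].
  have cki : connect g k i by rewrite csym.
  have ckj : connect g k j by apply: connect_trans cki (connect1 gij).
  have ki : k != i by apply/eqP => e; rewrite -e kN in iN.
  have kj : k != j by apply/eqP => e; rewrite -e kN in jN.
  have di : (#|nbrs g i| <= 1)%N.
    by rewrite leqNgt; apply/negP => /(H2 k i kN cki) e; rewrite e eqxx in ki.
  have dj : (#|nbrs g j| <= 1)%N.
    by rewrite leqNgt; apply/negP => /(H2 k j kN ckj) e; rewrite e eqxx in kj.
  have gji : g j i by rewrite g_sym.
  have cl : closed_mem g (mem [pred m | (m == i) || (m == j)]).
    apply: intro_closed; first exact: csym.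
    move=> x y gxy; rewrite !inE => /orP [] /eqP ex; subst x.
    + by rewrite (nbrs1 di gij gxy) eqxx orbT.
    + by rewrite (nbrs1 dj gji gxy) eqxx.
  have := closed_connect cl cik; rewrite !inE eqxx /= => /esym /orP [] /eqP e.
  + by rewrite e eqxx in ki.
  + by rewrite e eqxx in kj.
Qed.

Lemma leaf {k l m} : g k l -> k \in N -> g l m -> m = k.
Proof.
move=> gkl kN glm; case: hN => _ H2.
have dl : (#|nbrs g l| <= 1)%N.
  rewrite leqNgt; apply/negP => /(H2 k l kN (connect1 gkl)) e.
  by move: gkl; rewrite e g_irr.
by apply: (nbrs1 dl _ glm); rewrite g_sym.
Qed.

Lemma ap_apN {k l} : g k l -> ap k l = apN a p g k.
Proof.
move=> gkl; rewrite /apN; case: pickP => [m gkm|/(_ l)]; last by rewrite gkl.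
by case: hP => _ H _ _; apply: H gkl gkm (connect0 _ _).
Qed.

Lemma apN0 k : (forall l, ~~ g k l) -> apN a p g k = 0.
Proof. by move=> H; rewrite /apN; case: pickP => // m; rewrite (negbTE (H m)). Qed.

Definition suppx (x : V -> V -> R) :=
  [/\ forall i j, x i j = x j i, forall i j, 0 <= x i j & graph_is x g].

Lemma supp_zero {x i j} : suppx x -> ~~ g i j -> x i j = 0.
Proof.
case=> _ x0 xg gn; apply/eqP; rewrite eq_le x0 andbT leNgt; apply/negP.
by rewrite xg; apply/negP.
Qed.

Lemma supp_pos {x i j} : suppx x -> g i j -> 0 < x i j.
Proof. by case=> _ _ xg; rewrite xg. Qed.

Lemma vsum_leaf {x k l} : suppx x -> g k l -> k \in N -> vsum x l = x k l.
Proof.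
move=> sx gkl kN; rewrite /vsum (bigD1 k) //= big1 ?addr0.
  by case: sx => H _ _; rewrite H.
move=> m mk; apply: supp_zero => //; apply/negP => glm.
by move: mk; rewrite (leaf gkl kN glm) eqxx.
Qed.

Lemma vsum_ge {x} i j : suppx x -> x i j <= vsum x i.
Proof.
move=> sx; rewrite /vsum (bigD1 j) //= lerDl sumr_ge0 // => m _.
by case: sx => _ H _.
Qed.

Lemma vsum_pos {x i j} : suppx x -> g i j -> 0 < vsum x i.
Proof. by move=> sx gij; apply: lt_le_trans (supp_pos sx gij) (vsum_ge _ _ sx). Qed.

Lemma yf_N {x i j} : suppx x -> g i j -> i \in N ->
  yf a p x i j = apN a p g i / vsum x i.
Proof.
move=> sx gij iN; rewrite /yf g_ap // (vsum_leaf sx gij iN) (ap_apN gij).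
have := supp_pos sx gij; rewrite lt0r => /andP [x0 _].
by rewrite invfM mulrA mulrAC -(mulrA _ (x i j)) divff // mulr1.
Qed.

Lemma yf_N' {x i j} : suppx x -> g i j -> j \in N ->
  yf a p x i j = apN a p g j / vsum x j.
Proof.
move=> sx gij jN; have gji : g j i by rewrite g_sym.
rewrite -(yf_N sx gji jN) /yf ap_sym; case: sx => H _ _.
by rewrite (H i j) (mulrC (vsum x i)).
Qed.

Definition TT x i j := ap i j * x i j ^+ 2 / (vsum x i * vsum x j).
Definition SS x i j := if i \in N then ap i j * x i j / vsum x i else 0.

Lemma TT_SS x i j : suppx x -> TT x i j = SS x i j + SS x j i.
Proof.
move=> sx; rewrite /TT /SS.
case gij: (g i j); last first.
  have gji : ~~ g j i by rewrite g_sym gij.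
  rewrite (supp_zero sx (negbT gij)) (supp_zero sx gji).
  by rewrite expr0n /= !mulr0 !mul0r; case: ifP; case: ifP; rewrite ?addr0.
have x0 : x i j != 0 by rewrite gt_eqF // supp_pos.
have xs : x j i = x i j by case: sx => H _ _; rewrite H.
case iN: (i \in N).
  have jN : (j \in N) = false by apply/negbTE; rewrite -(N_edge gij).
  have gji : g j i by rewrite g_sym.
  rewrite jN addr0 (vsum_leaf sx gij iN).
  have v0 : vsum x i != 0 by rewrite gt_eqF // (vsum_pos sx gij).
  by field; rewrite x0 v0.
have jN : (j \in N) by rewrite -(negbK (j \in N)) -(N_edge gij) iN.
have gji : g j i by rewrite g_sym.
rewrite jN add0r (vsum_leaf sx gji jN) xs ap_sym.
have v0 : vsum x j != 0 by rewrite gt_eqF // (vsum_pos sx gji).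
by field; rewrite x0 v0.
Qed.

Lemma sumSS x i : suppx x -> \sum_j SS x i j = if i \in N then apN a p g i else 0.
Proof.
move=> sx; rewrite /SS; case: ifP => iN; last by rewrite big1.
transitivity (\sum_j apN a p g i * x i j / vsum x i).
  apply: eq_bigr => j _; case gij: (g i j); first by rewrite (ap_apN gij).
  by rewrite (supp_zero sx (negbT gij)) !mulr0 !mul0r.
rewrite -mulr_suml -mulr_sumr.
case: (pickP (g i)) => [j gij | ng].
  by rewrite -/(vsum x i) mulfK // gt_eqF // (vsum_pos sx gij).
rewrite apN0 ?mul0r // => l; by rewrite ng.
Qed.

Lemma Hsum x : suppx x ->
  \sum_i \sum_j TT x i j = 2 * \sum_(k in N) apN a p g k.
Proof.
move=> sx.
under eq_bigr do under eq_bigr do rewrite (TT_SS _ _ _ sx).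
under eq_bigr do rewrite big_split /=.
rewrite big_split /= [X in _ + X]exchange_big /= -mulr2n mulr_natl.
congr (_ *+ 2); under eq_bigr do rewrite (sumSS _ _ sx).
by rewrite -big_mkcond.
Qed.

Lemma Hf_eq x : suppx x -> Hf a p x = \sum_i \sum_j TT x i j.
Proof.
move=> sx; rewrite /Hf; apply: eq_bigr => i _; rewrite big_mkcond /=.
apply: eq_bigr => j _; case: ifP => // /negbT H.
have gn : ~~ g i j by case: sx => _ _ xg; rewrite -xg.
by rewrite /TT (supp_zero sx gn) expr0n /= mulr0 mul0r.
Qed.

Definition HH x := \sum_i \sum_(j | 0 < ap i j) TT x i j.

Lemma HH_eq x : suppx x -> HH x = \sum_i \sum_j TT x i j.
Proof.
move=> sx; rewrite /HH; apply: eq_bigr => i _; rewrite big_mkcond /=.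
apply: eq_bigr => j _; case: ifP => // /negbT H.
have gn : ~~ g i j by apply/negP => /g_ap; apply/negP.
by rewrite /TT (supp_zero sx gn) expr0n /= mulr0 mul0r.
Qed.

Lemma supp_q {q} : inDelta adj a p h1 q -> graph_is q g -> suppx q.
Proof. by case=> H1 H2 _ _ _ gq; split. Qed.

Local Notation CC := (2 * \sum_(k in N) apN a p g k).

Lemma Hf_q {q} : inDelta adj a p h1 q -> graph_is q g -> Hf a p q = CC.
Proof. by move=> D gq; rewrite Hf_eq ?Hsum //; apply: supp_q. Qed.

Lemma gamma_to_G q : inDelta adj a p h1 q -> graph_is q g ->
  inGamma adj a p h1 q -> inGammaG adj a p h1 g N q.
Proof.
move=> D gq [_ F0]; have sx := supp_q D gq.
split => // [i iN|i iN]; last first.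
  split => [j|]; first by rewrite gq.
  rewrite /vsum [RHS](bigID (g i)) /= [X in _ + X]big1 ?addr0 // => j /supp_zero; exact.
case: (pickP (g i)) => [j gij | ng]; last first.
  rewrite apN0 ?mul0r; last by move=> l; rewrite ng.
  by rewrite /vsum big1 // => j _; apply: (supp_zero sx); rewrite ng.
have := F0 i j; rewrite /Ff; have x0 : q i j != 0 by rewrite gt_eqF // supp_pos.
rewrite (negbTE x0) => /eqP; rewrite mulf_eq0 (negbTE x0) /= subr_eq0 => /eqP.
rewrite (yf_N sx gij iN) (Hf_q D gq) => e.
have v0 : vsum q i != 0 by rewrite gt_eqF // (vsum_pos sx gij).
have C0 : CC != 0.
  by rewrite -e mulf_neq0 // ?invr_eq0 // -(ap_apN gij) gt_eqF // g_ap.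
by rewrite -e; field; rewrite v0 -(ap_apN gij) ?gt_eqF // g_ap.
Qed.

Lemma G_to_gamma q : inGammaG adj a p h1 g N q -> inGamma adj a p h1 q.
Proof.
case=> D gq HN _; have sx := supp_q D gq; split => // i j.
rewrite /Ff; case: eqP => // /eqP x0.
have gij : g i j by rewrite -gq lt_def x0; case: D => _ H _ _ _; rewrite H.
have key : forall k, g i j -> k \in N -> yf a p q i j = apN a p g k / vsum q k -> 
   vsum q k != 0 -> apN a p g k != 0 -> yf a p q i j = CC.
  move=> k _ kN -> v0 a0; move: v0; rewrite HN // => v0.
  have C0 : CC != 0 by apply: contraNneq v0 => ->; rewrite invr0 mulr0.
  by rewrite invf_div mulrC divfK.
rewrite (Hf_q D gq); case iN: (i \in N).
  rewrite (key i gij iN (yf_N sx gij iN)) ?subrr ?mulr0 //.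
    by rewrite gt_eqF // (vsum_pos sx gij).
  by rewrite -(ap_apN gij) gt_eqF // g_ap.
have jN : j \in N by rewrite -(negbK (j \in N)) -(N_edge gij) iN.
have gji : g j i by rewrite g_sym.
rewrite (key j gij jN (yf_N' sx gij jN)) ?subrr ?mulr0 //.
  by rewrite gt_eqF // (vsum_pos sx gji).
by rewrite -(ap_apN gji) gt_eqF // g_ap.
Qed.

Lemma not_boundary q : inDelta adj a p h1 q -> graph_is q g ->
  ~ inBoundary adj a p h1 q.
Proof.
move=> D gq [_ [i [H s0]]]; have sx := supp_q D gq.
case: hP => _ _ _ /(_ i) [_ /(_ H) [m gim]].
move: s0; apply/eqP; rewrite gt_eqF //.
apply: (lt_le_trans (supp_pos sx gim)); rewrite (bigD1 m) ?g_ap //=.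
by rewrite lerDl sumr_ge0 // => l _; case: sx => _ ->.
Qed.

Lemma adj_sym i j : adj i j = adj j i.
Proof. by case: hs => [[H _] _ _ _ _]. Qed.

Definition Pm (f : edge adj) i j :=
  (((val f).1 == i) && ((val f).2 == j)) || (((val f).1 == j) && ((val f).2 == i)).

Lemma Pm_sym f i j : Pm f i j = Pm f j i.
Proof. by rewrite /Pm orbC. Qed.

Lemma match_uniq {e f i j} : Pm e i j -> Pm f i j -> e = f.
Proof.
case: e => [[e1 e2] He]; case: f => [[f1 f2] Hf]; rewrite /Pm /=.
have /andP [_ Re] := He; have /andP [_ Rf] := Hf; rewrite /= in Re Rf.
move=> /orP [] /andP [/eqP E1 /eqP E2] /orP [] /andP [/eqP F1 /eqP F2];
  subst; try (by apply: val_inj);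
  by move: (ltn_trans Re Rf); rewrite ltnn.
Qed.

Lemma match_ex {i j} : adj i j -> exists e, Pm e i j.
Proof.
move=> aij; have ne : i != j by apply/eqP => e; move: aij; rewrite e adj_irr.
have nr : enum_rank i != enum_rank j by apply: contra ne => /eqP /enum_rank_inj ->.
case: (ltngtP (enum_rank i) (enum_rank j)) => H.
- have E : is_edge adj (i, j) by rewrite /is_edge /= aij H.
  by exists (exist _ (i, j) E); rewrite /Pm /= !eqxx.
- have E : is_edge adj (j, i) by rewrite /is_edge /= adj_sym aij H.
  by exists (exist _ (j, i) E); rewrite /Pm /= !eqxx orbT.
- by move: nr; rewrite (ord_inj H) eqxx.
Qed.

Lemma edge_adj (e : edge adj) : adj (val e).1 (val e).2.
Proof. by case: e => [[e1 e2]] /= /andP []. Qed.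

Lemma arrOf_match (v : edge adj -> R) {e i j} : Pm e i j -> arrOf v i j = v e.
Proof.
move=> Pe; rewrite /arrOf (big_pred1 e) // => f /=.
apply/idP/eqP => [Pf|->//]; exact: match_uniq Pf Pe.
Qed.

Lemma arrOf_none (v : edge adj -> R) i j : (forall e, ~~ Pm e i j) -> arrOf v i j = 0.
Proof. by move=> H; rewrite /arrOf big_pred0 // => f; apply/negbTE/H. Qed.

Lemma Pm_self e : Pm e (val e).1 (val e).2.
Proof. by rewrite /Pm !eqxx. Qed.

Lemma Pm_edge f e : Pm f (val e).1 (val e).2 = (f == e).
Proof.
apply/idP/eqP => [Pf|->]; last exact: Pm_self.
exact: match_uniq Pf (Pm_self e).
Qed.

Section Q.
Variable q : V -> V -> R.
Hypothesis D : inDelta adj a p h1 q.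

Lemma q_sym i j : q i j = q j i.
Proof. by case: D. Qed.

Lemma q_ge0 i j : 0 <= q i j.
Proof. by case: D. Qed.

Definition Xq (f : edge adj) (t : R) i j := if Pm f i j then t else q i j.

Lemma arr_upd f t i j : arrOf (upd (edgevec q) f t) i j = Xq f t i j.
Proof.
rewrite /Xq; case: (boolP [exists e, Pm e i j]) => [/existsP [e Pe]|].
  rewrite (arrOf_match _ Pe) /upd; case: eqP => [E|/eqP ne]; first by rewrite -E Pe.
  have -> : Pm f i j = false.
    by apply/negbTE/negP => Pf; move: ne; rewrite (match_uniq Pe Pf) eqxx.
  rewrite /edgevec; case/orP: Pe => /andP [/eqP -> /eqP ->] //; exact: q_sym.
rewrite negb_exists => /forallP H; rewrite arrOf_none // (negbTE (H f)).
case aij: (adj i j); first by case: (match_ex aij) => e Pe; move: (H e); rewrite Pe.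
by case: D => _ _ -> //; rewrite aij.
Qed.

Lemma arr_updE f t : arrOf (upd (edgevec q) f t) = Xq f t.
Proof. by apply/funext => i; apply/funext => j; apply: arr_upd. Qed.

Lemma Xq_self f : Xq f (edgevec q f) = q.
Proof.
apply/funext => i; apply/funext => j; rewrite /Xq; case: ifP => // Pf.
by rewrite /edgevec; case/orP: Pf => /andP [/eqP -> /eqP ->] //; exact: q_sym.
Qed.

Lemma Fsmooth_upd f t e :
  Fsmooth a p (upd (edgevec q) f t) e =
  (if f == e then t else edgevec q e) *
  (yf a p (Xq f t) (val e).1 (val e).2 - HH (Xq f t)).
Proof.
rewrite /Fsmooth arr_updE; congr (_ * (_ - _)).
  by rewrite /Xq Pm_edge.
by rewrite /Hsmooth arr_updE.
Qed.

End Q.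

Lemma vsum_ap {q i j} : inDelta adj a p h1 q -> graph_is q g -> 0 < ap i j -> 0 < vsum q i.
Proof.
move=> D G H; case: hP => _ _ _ /(_ i) [_ /(_ (ex_intro _ j (conj (ap_adj _ _ H) H))) [m gim]].
exact: (vsum_pos (supp_q D G) gim).
Qed.

Section Q2.
Variable q : V -> V -> R.
Hypotheses (D : inDelta adj a p h1 q) (G : graph_is q g).

Lemma jac_zero_off (e f : edge adj) : edgevec q e = 0 -> f != e -> jac a p q e f = 0.
Proof.
move=> e0 fe; rewrite /jac.
under eq_fun do rewrite (Fsmooth_upd _ D) (negbTE fe) e0 mul0r.
exact: derive1_cst.
Qed.

Lemma jac_zero_diag (e : edge adj) : edgevec q e = 0 -> jac a p q e e = - HH q.
Proof.
move=> e0; rewrite /jac.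
under eq_fun do rewrite (Fsmooth_upd _ D) eqxx.
have X0 : Xq q e 0 = q by rewrite -e0 (Xq_self _ D).
rewrite e0 derive_tG.
  rewrite X0 /yf; case: ifP => _; last by rewrite sub0r.
  by rewrite -/(edgevec q e) e0 mulr0 mul0r sub0r.
have HY : forall i j, Xq q e t i j @[t --> (0:R)] --> Xq q e 0 i j.
  by move=> i j; rewrite /Xq; case: ifP => _; [exact: cvg_id | exact: cvg_cst].
have nz : forall i j, 0 < ap i j -> vsum (Xq q e 0) i * vsum (Xq q e 0) j != 0.
  move=> i j H; rewrite X0; apply: mulf_neq0; rewrite gt_eqF //.
    exact: (vsum_ap D G H).
  by rewrite ap_sym in H; exact: (vsum_ap D G H).
apply: cvgB.
  rewrite /yf; case: ifP => H; last exact: cvg_cst.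
  exact: (@ratio1_cvg _ _ _ _ HY _ _ _ (nz _ _ H)).
rewrite /HH; apply: cvg_big => //; first exact: add_continuous.
move=> i _; apply: cvg_big => //; first exact: add_continuous.
move=> j H; exact: (@ratio_cvg _ _ _ _ HY _ _ _ (nz _ _ H)).
Qed.

End Q2.

Section Q3.
Variable q : V -> V -> R.
Hypotheses (D : inDelta adj a p h1 q) (G : graph_is q g) (Gam : inGamma adj a p h1 q).

Definition kN (e : edge adj) := if (val e).1 \in N then (val e).1 else (val e).2.

Lemma qe_g {e : edge adj} : 0 < edgevec q e -> g (val e).1 (val e).2.
Proof. by rewrite /edgevec G. Qed.

Lemma kN_in {e : edge adj} : 0 < edgevec q e -> kN e \in N.
Proof.
move=> /qe_g H; rewrite /kN; case: ifP => // /negbT.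
by rewrite (N_edge H) negbK.
Qed.

Lemma yf_kN {x} {e : edge adj} : suppx x -> g (val e).1 (val e).2 ->
  yf a p x (val e).1 (val e).2 = apN a p g (kN e) / vsum x (kN e).
Proof.
move=> sx H; rewrite /kN; case: ifP => iN; first exact: yf_N.
apply: yf_N' => //; by rewrite -(negbK (_ \in N)) -(N_edge H) iN.
Qed.

Lemma suppX {f : edge adj} {t} : 0 < edgevec q f -> 0 < t -> suppx (Xq q f t).
Proof.
move=> qf t0; split => i j; rewrite /Xq.
- by rewrite Pm_sym (q_sym _ D).
- by case: ifP => _; [exact: ltW | exact: (q_ge0 _ D)].
- case: ifP => Pf; last exact: G.
  rewrite t0; apply/esym; have := qe_g qf.
  by case/orP: Pf => /andP [/eqP <- /eqP <-] //; rewrite g_sym.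
Qed.

Lemma edge_neq (f : edge adj) : (val f).1 != (val f).2.
Proof. by apply/eqP => E; have := edge_adj f; rewrite E adj_irr. Qed.

Lemma vsumX (f : edge adj) t k : vsum (Xq q f t) k =
  vsum q k + (if (k == (val f).1) || (k == (val f).2) then t - edgevec q f else 0).
Proof.
rewrite /vsum.
have -> : \sum_j Xq q f t k j = \sum_j (q k j + (if Pm f k j then t - q k j else 0)).
  by apply: eq_bigr => j _; rewrite /Xq; case: ifP => _; rewrite ?addr0 // addrC subrK.
rewrite big_split /=; congr (_ + _).
have nf := edge_neq f.
case: eqP => [->|n1] /=.
  rewrite -big_mkcond /= (big_pred1 (val f).2) // => j.
  by rewrite /Pm eqxx /= [_.2 == _.1]eq_sym (negbTE nf) andbF orbF eq_sym.
case: eqP => [->|n2] /=.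
  rewrite -big_mkcond /= (big_pred1 (val f).1); first by rewrite (q_sym _ D (val f).2).
  move=> j.
  by rewrite /Pm eqxx andbT /= (negbTE nf) /= eq_sym.
rewrite big1 // => j _; rewrite /Pm; case: ifP => //.
by case/orP => /andP [/eqP E1 /eqP E2]; [case: n1 | case: n2].
Qed.

Local Notation CC := (2 * \sum_(k in N) apN a p g k).

Lemma eqC {e : edge adj} : 0 < edgevec q e -> apN a p g (kN e) / vsum q (kN e) = CC.
Proof.
move=> qe; have sx := supp_q D G; case: Gam => _ /(_ (val e).1 (val e).2).
rewrite /Ff gt_eqF // => /eqP; rewrite mulf_eq0 gt_eqF //= subr_eq0 => /eqP.
by rewrite (yf_kN sx (qe_g qe)) (Hf_q D G).
Qed.

Lemma HH_X {f : edge adj} {t} : 0 < edgevec q f -> 0 < t -> HH (Xq q f t) = CC.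
Proof. by move=> qf t0; rewrite HH_eq ?Hsum //; apply: suppX. Qed.

Lemma jac_supp (e f : edge adj) : 0 < edgevec q e -> 0 < edgevec q f ->
  jac a p q e f = - (edgevec q e * (apN a p g (kN e) / vsum q (kN e) ^+ 2) *
    (if (kN e == (val f).1) || (kN e == (val f).2) then 1 else 0)).
Proof.
move=> qe qf.
have s0 : 0 < vsum q (kN e).
  rewrite /kN; case: ifP => _; first exact: (vsum_pos (supp_q D G) (qe_g qe)).
  by apply: (vsum_pos (supp_q D G)); rewrite g_sym; exact: (qe_g qe).
have eC := eqC qe.
pose tau : R := if (kN e == (val f).1) || (kN e == (val f).2) then 1 else 0.
pose be : R := if f == e then 1 else 0.
have tau01 : 0 <= tau <= 1 by rewrite /tau; case: ifP; rewrite ?lexx ?ler01.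
rewrite /jac (@derive_fact _ _ (fun h => be * (apN a p g (kN e) / (vsum q (kN e) + tau * h) - CC)
   - edgevec q e * apN a p g (kN e) * tau / (vsum q (kN e) * (vsum q (kN e) + tau * h)))).
- rewrite mulr0 addr0 -eC -/tau; field; by rewrite gt_eqF.
- by apply: K_cvg; rewrite gt_eqF.
have n1 : \forall h \near (0:R), - edgevec q f < h by apply: lt_nbhsr; rewrite oppr_lt0.
have n2 : \forall h \near (0:R), - vsum q (kN e) < h by apply: lt_nbhsr; rewrite oppr_lt0.
near=> h => hn.
have hh1 : - edgevec q f < h by near: h.
have hh2 : - vsum q (kN e) < h by near: h.
have ht : 0 < h + edgevec q f by lra.
rewrite !(Fsmooth_upd _ D) (yf_kN (suppX qf ht) (qe_g qe)) (yf_kN (suppX qf qf) (qe_g qe)).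
rewrite (HH_X qf ht) (HH_X qf qf) !vsumX subrr addrK -/tau.
have -> : (if (kN e == (val f).1) || (kN e == (val f).2) then 0 else 0) = 0 :> R by case: ifP.
have -> : (if (kN e == (val f).1) || (kN e == (val f).2) then h else 0) = tau * h.
  by rewrite /tau; case: ifP; rewrite ?mul1r ?mul0r.
have st : vsum q (kN e) + tau * h != 0.
  case/andP: tau01 => t0 t1; apply: lt0r_neq0; nra.
rewrite addr0 /be; case: eqP => [E|_].
  rewrite E; field; by rewrite st gt_eqF.
field; by rewrite st gt_eqF.
Unshelve. all: by end_near.
Qed.

End Q3.

Section Q4.
Variable q : V -> V -> R.
Hypotheses (D : inDelta adj a p h1 q) (G : graph_is q g) (Gam : inGamma adj a p h1 q).

Lemma HH_ge0 : 0 <= HH q.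
Proof.
rewrite /HH sumr_ge0 // => i _; rewrite sumr_ge0 // => j _.
have vs0 : forall k, 0 <= vsum q k by move=> k; rewrite sumr_ge0 // => m _; exact: (q_ge0 _ D).
rewrite /TT; apply: divr_ge0; [apply: mulr_ge0; [exact: ap_ge0 | exact: sqr_ge0] | apply: mulr_ge0; exact: vs0].
Qed.

Lemma kN_end {e : edge adj} {m} : 0 < edgevec q e -> m \in N ->
  (m == (val e).1) || (m == (val e).2) -> kN e = m.
Proof.
move=> qe mN /orP [] /eqP E; rewrite /kN; first by rewrite -E mN.
by have := N_edge (qe_g _ G qe); rewrite -E mN /= => ->.
Qed.

Lemma apN_ge0 m : 0 <= apN a p g m.
Proof. by rewrite /apN; case: pickP => // k _; exact: ap_ge0. Qed.

Lemma stable_q : eigen_nonpos_re (jacmx adj a p q).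
Proof.
move=> z; rewrite -char_poly_tr -eigenvalue_root_char => /eigenvalueP [v Hv vn0].
rewrite leNgt; apply/negP => zp; move/negP: vn0; apply; apply/eqP/rowP => l0; rewrite mxE.
pose E := fun k : 'I_#|{: edge adj}| => (enum_val k : edge adj).
pose J k l := jac a p q (E k) (E l).
have Ent : forall l, z * v 0 l = \sum_k v 0 k * (J l k)%:C%C.
  move=> l; have /rowP/(_ l) := Hv; rewrite !mxE => <-.
  by apply: eq_bigr => k _; rewrite !mxE.
have zn : z != 0 by apply: contraTneq zp => ->; rewrite ltxx.
have Z : forall l, edgevec q (E l) = 0 -> v 0 l = 0.
  move=> l e0; have := Ent l; rewrite (bigD1 l) //= big1 ?addr0; last first.
    move=> k kl; rewrite /J (jac_zero_off _ D) ?rmorph0 ?mulr0 //.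
    by apply: contra kl => /eqP /enum_val_inj ->.
  rewrite /J (jac_zero_diag _ D G) // rmorphN mulrN => H.
  have : (z + (HH q)%:C%C) * v 0 l = 0 by rewrite mulrDl H [_ * v 0 l]mulrC addNr.
  move/eqP; rewrite mulf_eq0 => /orP [/eqP H'|/eqP //].
  by move: (nz_pos _ _ _ zp HH_ge0); rewrite H' eqxx.
pose supp k := 0 < edgevec q (E k).
have zs : forall k, ~~ supp k -> edgevec q (E k) = 0.
  move=> k; rewrite /supp lt0r negb_and negbK => /orP [/eqP //|].
  by rewrite /edgevec (q_ge0 _ D).
pose tau m k : R := if (m == (val (E k)).1) || (m == (val (E k)).2) then 1 else 0.
pose cc m := apN a p g m / vsum q m ^+ 2.
pose S m := \sum_(k | supp k) v 0 k * (tau m k)%:C%C.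
have Ent2 : forall l, supp l ->
    z * v 0 l = - ((edgevec q (E l) * cc (kN (E l)))%:C%C * S (kN (E l))).
  move=> l sl; rewrite Ent (bigID supp) /= [X in _ + X]big1 ?addr0; last first.
    by move=> k /zs /Z ->; rewrite mul0r.
  rewrite /S mulr_sumr -sumrN; apply: eq_big => // k sk.
  rewrite /J (jac_supp _ D G Gam) // /cc /tau.
  rewrite !rmorphN !rmorphM /=; ring.
have SN : forall m, m \in N -> S m = 0.
  move=> m mN.
  have E1 : z * S m = - ((cc m * \sum_(k | supp k) edgevec q (E k) * tau m k)%:C%C * S m).
    rewrite {1}/S [z * _]mulr_sumr.
    transitivity (\sum_(k | supp k) - ((cc m * (edgevec q (E k) * tau m k))%:C%C * S m)).
      apply: eq_bigr => k sk; rewrite [z * _]mulrA Ent2 //.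
      rewrite /tau; case: ifP => H.
        rewrite (kN_end sk mN H); rewrite !rmorphM !rmorph1 /=; ring.
      rewrite !rmorphM !rmorph0 /=; ring.
    by rewrite sumrN -mulr_suml -rmorph_sum -mulr_sumr.
  have w0 : 0 <= cc m * \sum_(k | supp k) edgevec q (E k) * tau m k.
    apply: mulr_ge0; first by rewrite /cc divr_ge0 ?apN_ge0 ?sqr_ge0.
    apply: sumr_ge0 => k sk; apply: mulr_ge0; first exact: ltW.
    by rewrite /tau; case: ifP.
  have : (z + (cc m * \sum_(k | supp k) edgevec q (E k) * tau m k)%:C%C) * S m = 0.
    by rewrite mulrDl E1 addrC subrr.
  move/eqP; rewrite mulf_eq0 => /orP [/eqP H'|/eqP //].
  by move: (nz_pos _ _ _ zp w0); rewrite H' eqxx.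
case: (boolP (supp l0)) => sl; last by apply: Z; apply: zs.
have := Ent2 l0 sl; rewrite SN ?mulr0 ?oppr0; last exact: kN_in.
by move/eqP; rewrite mulf_eq0 (negbTE zn) /= => /eqP.
Qed.

End Q4.

End Pf.

Local Close Scope classical_set_scope.

Theorem proposition7 (R : realType) (V : finType) (adj : rel V)
  (a p : V -> V -> R) (h1 : R) :
  standing_hyps adj a p h1 ->
  forall (g : rel V) (N : {set V}),
    is_subgraph adj g -> P_sub adj a p g -> is_nuclei g N ->
  forall q : V -> V -> R,
    inDelta adj a p h1 q -> graph_is q g ->
    (inGamma adj a p h1 q <-> inGammaG adj a p h1 g N q) /\
    (inGamma adj a p h1 q -> stable_eq adj a p h1 q).
Proof.
move=> hs g N hsub hP hN q D G.
split; first split.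
- by move=> Gm; eapply gamma_to_G; eassumption.
- by move=> Gm; eapply G_to_gamma; eassumption.
- move=> Gm; split => //.
  + by eapply not_boundary; eassumption.
  + by eapply stable_q; eassumption.
Qed.
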